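(* Let $G$ be a finite group with $d(G) \geq 2$. Then $\mathrm{Cyc}(G)$ is the smallest normal subgroup $N$ of $G$ such that $\mathrm{Cyc}(G/N)$ is trivial; that is, $\mathrm{Cyc}(G/\mathrm{Cyc}(G))=1$, and $\mathrm{Cyc}(G) \leq N$ for every normal subgroup $N$ of $G$ with $\mathrm{Cyc}(G/N)=1$.
   Context: For a finite group $H$, $d(H)$ denotes the minimal size of a generating set of $H$. The cycliciser of a group $H$ is $\mathrm{Cyc}(H) = \{c \in H \mid \langle c,h\rangle \text{ is cyclic for all } h \in H\}$; for finite $H$ it is a normal subgroup of $H$. *)

(* Defs.v *)
From mathcomp Require Import all_boot all_fingroup all_solvable.
Set Implicit Arguments. Unset Strict Implicit. Unset Printing Implicit Defensive.
Local Open Scope group_scope.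

Definition dgen (gT : finGroupType) (H : {set gT}) : nat :=
  \big[minn/#|H|]_(A : {set gT} | (A \subset H) && (<<A>> == H)) #|A|.

Definition Cyc (gT : finGroupType) (H : {set gT}) : {set gT} :=
  [set c in H | [forall h in H, cyclic <<[set c; h]>>]].

(* Main.v *)
Require Import Defs.
From mathcomp Require Import all_boot all_fingroup all_solvable.
Set Implicit Arguments. Unset Strict Implicit. Unset Printing Implicit Defensive.
Local Open Scope group_scope.

Section Aux.
Variable gT : finGroupType.
Implicit Types x y a b c : gT.

Lemma cyc2_commute x y : cyclic <<[set x; y]>> -> commute x y.
Proof.
move=> /cyclic_abelian /centsP cA.
by apply: cA; apply: mem_gen; rewrite !inE eqxx ?orbT.
Qed.

Lemma pelt_cyc (p : nat) x y : p.-elt x -> p.-elt y -> cyclic <<[set x; y]>> ->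
  (x \in <[y]>) || (y \in <[x]>).
Proof.
move=> px py cxy.
have sx : <[x]> \subset <<[set x; y]>> by rewrite cycle_subG mem_gen // !inE eqxx.
have sy : <[y]> \subset <<[set x; y]>> by rewrite cycle_subG mem_gen // !inE eqxx orbT.
rewrite -[x \in _]cycle_subG -[y \in _]cycle_subG.
rewrite -(cardSg_cyclic cxy sx sy) -(cardSg_cyclic cxy sy sx) -!orderE.
have ex : #[x] = (p ^ logn p #[x])%N by rewrite -p_part part_pnat_id.
have ey : #[y] = (p ^ logn p #[y])%N by rewrite -p_part part_pnat_id.
rewrite ex ey.
have [le|lt] := leqP (logn p #[x]) (logn p #[y]).
  by rewrite dvdn_exp2l.
by rewrite orbC dvdn_exp2l // ltnW.
Qed.

Lemma cyc3_sub a b c m : a \in <[m]> -> b \in <[m]> -> c \in <[m]> ->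
  cyclic <<[set a; b; c]>>.
Proof.
move=> am bm cm; apply: (cyclicS _ (cycle_cyclic m)).
rewrite gen_subG; apply/subsetP => z; rewrite !inE.
by case: eqP => [->//|_]; case: eqP => [->//|_]; move/eqP->.
Qed.

Lemma pelt_cyc3 (p : nat) a b c : p.-elt a -> p.-elt b -> p.-elt c ->
  cyclic <<[set a; b]>> -> cyclic <<[set a; c]>> -> cyclic <<[set b; c]>> ->
  cyclic <<[set a; b; c]>>.
Proof.
move=> pa pb pc cab cac cbc.
have := pelt_cyc pa pb cab; have := pelt_cyc pa pc cac; have := pelt_cyc pb pc cbc.
have ca := cycle_id a; have cb := cycle_id b; have cc := cycle_id c.
have tr : forall u v w : gT, u \in <[v]> -> v \in <[w]> -> u \in <[w]>.
  by move=> u v w uv vw; apply: (subsetP _ _ uv); rewrite cycle_subG.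
case/orP=> [bc|cb']; case/orP=> [ac|ca']; case/orP=> [ab|ba].
- exact: (cyc3_sub ac bc cc).
- exact: (cyc3_sub ac bc cc).
- exact: (cyc3_sub ca (tr _ _ _ bc ca') (tr _ _ _ cc ca')).
- exact: (cyc3_sub ca (tr _ _ _ bc ca') (tr _ _ _ cc ca')).
- exact: (cyc3_sub (tr _ _ _ ac cb') cb cb').
- exact: (cyc3_sub ca ba (tr _ _ _ cb' ba)).
- exact: (cyc3_sub (tr _ _ _ ab cb) cb cb').
- exact: (cyc3_sub ca ba ca').
Qed.

Lemma sub_gen2 a b x : x \in <[a]> -> x \in <<[set a; b]>>.
Proof.
move=> xa; apply: (subsetP _ _ xa); rewrite cycle_subG mem_gen // !inE eqxx.
by [].
Qed.

Lemma cyc3 a b c :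
  cyclic <<[set a; b]>> -> cyclic <<[set a; c]>> -> cyclic <<[set b; c]>> ->
  cyclic <<[set a; b; c]>>.
Proof.
move=> cab cac cbc.
set S := [set a; b; c].
have abA : abelian <<S>>.
  rewrite abelian_gen; apply/centsP => x; rewrite !inE => Hx y; rewrite !inE => Hy.
  have cab' := cyc2_commute cab; have cac' := cyc2_commute cac.
  have cbc' := cyc2_commute cbc.
  by case/orP: Hx => [/orP[]|] /eqP->; case/orP: Hy => [/orP[]|] /eqP->;
    rewrite /commute //; apply: esym.
apply: nil_Zgroup_cyclic; last exact: abelian_nil.
apply/forall_inP => V /SylowP[p pr_p sylV].
pose f := fun x : gT => x.`_p.
have fM : {in <<S>> &, {morph f : x y / x * y}}.
  by move=> x y Hx Hy; rewrite /f consttM //; apply: (centsP abA).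
pose fm := @Morphism _ _ <<S>> f fM.
have cD : cyclic <<[set f a; f b; f c]>>.
  apply: (@pelt_cyc3 p); rewrite ?p_elt_constt //.
  - apply: cyclicS cab; rewrite gen_subG; apply/subsetP=> z; rewrite !inE.
    case/orP=> /eqP->. exact: sub_gen2 (cycle_constt _ _).
    by rewrite setUC; apply: sub_gen2 (cycle_constt _ _).
  - apply: cyclicS cac; rewrite gen_subG; apply/subsetP=> z; rewrite !inE.
    case/orP=> /eqP->. exact: sub_gen2 (cycle_constt _ _).
    by rewrite setUC; apply: sub_gen2 (cycle_constt _ _).
  - apply: cyclicS cbc; rewrite gen_subG; apply/subsetP=> z; rewrite !inE.
    case/orP=> /eqP->. exact: sub_gen2 (cycle_constt _ _).
    by rewrite setUC; apply: sub_gen2 (cycle_constt _ _).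
apply: cyclicS cD.
have Heq : <<[set f a; f b; f c]>> = fm @* <<S>>.
  rewrite morphim_gen ?subset_gen // morphimEsub ?subset_gen //.
  congr <<_>>; apply/setP => z; rewrite !inE; apply/idP/imsetP.
    by case/orP => [/orP[]|] /eqP->; [exists a | exists b | exists c];
      rewrite // !inE eqxx ?orbT.
  by case=> y; rewrite !inE => /orP[/orP[]|] /eqP-> ->; rewrite eqxx ?orbT.
apply: (@subset_trans _ _ (fm @* <<S>>)); last by rewrite -Heq; apply: subxx.
apply/subsetP => x Vx.
have xS : x \in <<S>> by apply: (subsetP (pHall_sub sylV)).
have -> : x = fm x.
  by rewrite /= /f constt_p_elt //; apply: mem_p_elt (pHall_pgroup sylV) Vx.
exact: mem_morphim.
Qed.

End Aux.

Section CycG.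
Variable gT : finGroupType.
Implicit Types G : {group gT}.

Lemma CycP G c : reflect (c \in G /\ forall h, h \in G -> cyclic <<[set c; h]>>)
  (c \in Cyc G).
Proof.
rewrite /Cyc inE; apply: (iffP andP) => [[cG /forall_inP H]|[cG H]].
  by split.
by split=> //; apply/forall_inP.
Qed.

Lemma in3 (a b c : gT) : (a \in <<[set a; b; c]>>) * (b \in <<[set a; b; c]>>)
  * (c \in <<[set a; b; c]>>).
Proof. by split; [split|]; apply: mem_gen; rewrite !inE eqxx ?orbT. Qed.

Lemma Cyc_group_set G : group_set (Cyc G).
Proof.
apply/group_setP; split.
  apply/CycP; split=> // h hG; apply: (cyclicS _ (cycle_cyclic h)).
  rewrite gen_subG; apply/subsetP => z; rewrite !inE.
  by case/orP=> /eqP->; rewrite ?group1 ?cycle_id.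
move=> x y /CycP[xG Hx] /CycP[yG Hy]; apply/CycP; split=> [|h hG].
  exact: groupM.
have c3 : cyclic <<[set x; y; h]>> by apply: cyc3; auto.
apply: cyclicS c3; rewrite gen_subG; apply/subsetP => z; rewrite !inE.
by case/orP=> /eqP->; rewrite ?groupM ?in3.
Qed.

Canonical Cyc_group G := Group (Cyc_group_set G).

Lemma Cyc_normal G : Cyc G <| G.
Proof.
apply/andP; split.
  by apply/subsetP => c /CycP[].
apply: subset_trans (cent_sub _); apply/centsP => h hG c /CycP[_ Hc].
by apply/esym/cyc2_commute/Hc.
Qed.

End CycG.

Unset Implicit Arguments.

Theorem lemma2p2 (gT : finGroupType) (G : {group gT}) :
  (2 <= dgen G)%N ->
  Cyc (G / Cyc G) = 1 /\
  (forall N : {group gT}, N <| G -> Cyc (G / N) = 1 -> Cyc G \subset N).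
Proof.
move=> _; split.
  apply/eqP; rewrite eqEsubset sub1G andbT; apply/subsetP => X /CycP[XG HX].
  case/morphimP: XG => x xN xG EX; subst X.
  rewrite inE; apply/eqP; apply: coset_id.
  apply/CycP; split => // h hG.
  have hN : h \in 'N(Cyc G) by apply: (subsetP (normal_norm (Cyc_normal G))).
  case/cyclicP: (HX (coset (Cyc G) h) (mem_quotient _ hG)) => Y defY.
  have sub2 : <<[set coset (Cyc G) x; coset (Cyc G) h]>> \subset G / Cyc G.
    rewrite gen_subG; apply/subsetP => z; rewrite !inE.
    by case/orP=> /eqP->; apply: mem_quotient.
  have YG : Y \in G / Cyc G by apply: (subsetP sub2); rewrite defY cycle_id.
  case/morphimP: YG => g gN gG YE.
  have /cycleP[i Ei] : coset (Cyc G) x \in <[Y]>.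
    by rewrite -defY mem_gen // !inE eqxx.
  have /cycleP[j Ej] : coset (Cyc G) h \in <[Y]>.
    by rewrite -defY mem_gen // !inE eqxx orbT.
  rewrite YE -morphX // in Ei; rewrite YE -morphX // in Ej.
  case: (kercoset_rcoset xN (groupX i gN) Ei) => c1 c1C ->.
  case: (kercoset_rcoset hN (groupX j gN) Ej) => c2 c2C ->.
  have [c1G H1] := CycP _ _ c1C; have [c2G H2] := CycP _ _ c2C.
  have c3 : cyclic <<[set c1; c2; g]>> by apply: cyc3; auto.
  apply: cyclicS c3; rewrite gen_subG; apply/subsetP => z; rewrite !inE.
  by case/orP=> /eqP->; rewrite groupM ?groupX ?in3.
move=> N nNG CN1; apply/subsetP => c /CycP[cG Hc].
have nN : c \in 'N(N) by apply: (subsetP (normal_norm nNG)).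
apply: coset_idr => //.
suff : coset N c \in Cyc (G / N) by rewrite CN1 inE => /eqP.
apply/CycP; split; first exact: mem_quotient.
move=> H /morphimP[h hN hG ->].
apply: (cyclicS _ (morphim_cyclic (coset_morphism N) (Hc h hG))).
rewrite gen_subG; apply/subsetP => z; rewrite !inE.
by case/orP=> /eqP->; apply: mem_morphim => //; apply: mem_gen; rewrite !inE eqxx ?orbT.
Qed.
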